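(* Let $\mathcal{H}$ be a complex Hilbert space, let $A\in\mathcal{B}(\mathcal{H})$ be a nonzero positive operator, and let $\mathbb{A}=\begin{pmatrix}A&O\\O&A\end{pmatrix}$ acting on $\mathcal{H}\oplus\mathcal{H}$. Let $P,Q,R,S\in\mathcal{B}_A(\mathcal{H})$. Then for every $\lambda\in[0,1]$, $$\omega_{\mathbb{A}}\left[\begin{pmatrix}P&Q\\R&S\end{pmatrix}\right]\leq \frac{1}{2}\left(\|P\|_A+2\omega_A(S)+\sqrt{\|\lambda^2 PP^{\sharp_A}+QQ^{\sharp_A}\|_A}+\sqrt{\|(1-\lambda)^2 PP^{\sharp_A}+R^{\sharp_A}R\|_A}\right).$$
   Context: For a positive operator $A$ on $\mathcal{H}$, $\langle x,y\rangle_A:=\langle Ax,y\rangle$ and $\|x\|_A:=\sqrt{\langle x,x\rangle_A}$. $\mathcal{B}_A(\mathcal{H})$ is the set of $T\in\mathcal{B}(\mathcal{H})$ with $\mathcal{R}(T^*A)\subseteq\mathcal{R}(A)$; for such $T$, $T^{\sharp_A}$ denotes the unique solution $X$ of $AX=T^*A$ with $\mathcal{R}(X)\subseteq\overline{\mathcal{R}(A)}$ (equivalently $T^{\sharp_A}=A^\dagger T^*A$). $\mathcal{B}_{A^{1/2}}(\mathcal{H})$ is the set of $T$ with $\|Tx\|_A\le\lambda\|x\|_A$ for some $\lambda>0$ and all $x$. For $T\in\mathcal{B}_{A^{1/2}}(\mathcal{H})$: $\|T\|_A:=\sup\{\|Tx\|_A:\|x\|_A=1\}$ and $\omega_A(T):=\sup\{|\langle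 Tx,x\rangle_A|:\|x\|_A=1\}$. The same notions with $A$ replaced by the positive operator $\mathbb{A}$ on $\mathcal{H}\oplus\mathcal{H}$ give $\omega_{\mathbb{A}}$, $\|\cdot\|_{\mathbb{A}}$, where $\langle (x_1,x_2),(y_1,y_2)\rangle_{\mathbb{A}}=\langle x_1,y_1\rangle_A+\langle x_2,y_2\rangle_A$. *)

(* Defs.v *)
From HB Require Import structures.
From mathcomp Require Import all_boot all_order all_algebra.
From mathcomp Require Import classical_sets reals.
From mathcomp Require Export complex.
Set Implicit Arguments. Unset Strict Implicit. Unset Printing Implicit Defensive.
Import Order.TTheory GRing.Theory Num.Theory.
Local Open Scope ring_scope.
Local Open Scope classical_set_scope.

Section Hilbert.
Variables (F : realType) (V : lmodType F[i]) (ip : V -> V -> F[i]).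

Definition hnorm (x : V) : F := Num.sqrt (complex.Re (ip x x)).

Definition ip_complete : Prop :=
  forall u : nat -> V,
    (forall e : F, 0 < e -> exists N : nat, forall m n : nat,
        (N <= m)%N -> (N <= n)%N -> hnorm (u m - u n) < e) ->
    exists l : V, forall e : F, 0 < e -> exists N : nat, forall n : nat,
        (N <= n)%N -> hnorm (u n - l) < e.

Definition is_hilbert : Prop :=
  [/\ forall (a : F[i]) (x y z : V), ip (a *: x + y) z = a * ip x z + ip y z,
      forall x y : V, ip x y = (ip y x)^*,
      forall x : V, 0 <= ip x x,
      forall x : V, ip x x = 0 -> x = 0
    & ip_complete].

Definition bounded_op (T : V -> V) : Prop :=
  (forall (a : F[i]) (x y : V), T (a *: x + y) = a *: T x + T y) /\
  exists M : F, forall x : V, hnorm (T x) <= M * hnorm x.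

Definition positive_op (A : V -> V) : Prop :=
  bounded_op A /\ forall x : V, 0 <= ip (A x) x.

Definition ipA (A : V -> V) (x y : V) : F[i] := ip (A x) y.
Definition normA (A : V -> V) (x : V) : F := Num.sqrt (complex.Re (ipA A x x)).

(* T \in B_A(H): T \in B(H) and R(T^* A) \subseteq R(A).  The vector
   T^*(A x) is characterised by <z, T^*(A x)> = <T z, A x> for all z, so
   "A y = T^*(A x)" is written as  forall z, <z, A y> = <T z, A x>. *)
Definition in_BA (A T : V -> V) : Prop :=
  bounded_op T /\
  forall x : V, exists y : V, forall z : V, ip z (A y) = ip (T z) (A x).

Definition in_closure_range (A : V -> V) (v : V) : Prop :=
  forall e : F, 0 < e -> exists y : V, hnorm (v - A y) < e.

(* X = T^{#_A}: the (unique) solution of A X = T^* A with R(X) in the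
   closure of R(A).  "A (X x) = T^*(A x)" is written via the defining
   property of the adjoint as above. *)
Definition is_sharpA (A T X : V -> V) : Prop :=
  (forall x z : V, ip z (A (X x)) = ip (T z) (A x)) /\
  (forall x : V, in_closure_range A (X x)).

Definition opnormA (A T : V -> V) : F :=
  sup [set normA A (T x) | x in [set x : V | normA A x = 1]].

Definition omegaA (A T : V -> V) : F :=
  sup [set complex.Re `|ipA A (T x) x| | x in [set x : V | normA A x = 1]].

(* omega_{AA} of the operator matrix [[P, Q], [R, S]] on H (+) H, where
   AA = diag(A, A), so <(x1,x2),(y1,y2)>_AA = <x1,y1>_A + <x2,y2>_A. *)
Definition omegaA2 (A P Q R S : V -> V) : F :=
  sup [set complex.Re `|ipA A (P x.1 + Q x.2) x.1 + ipA A (R x.1 + S x.2) x.2|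
       | x in [set x : V * V | normA A x.1 ^+ 2 + normA A x.2 ^+ 2 = 1]].

End Hilbert.

Definition rC (F : realType) (r : F) : F[i] := Complex r 0.

(* Main.v *)
Require Import Defs.
From HB Require Import structures.
From mathcomp Require Import all_boot all_order all_algebra.
From mathcomp Require Import boolp classical_sets reals complex.
From mathcomp Require Import ring lra.
Import Order.TTheory GRing.Theory Num.Theory.
Local Open Scope ring_scope.
Section C.
Context {F : realType}.
Local Notation C := F[i].
Implicit Types z w : C.
Local Notation Re := complex.Re.
Local Notation Im := complex.Im.
Local Notation "x %:C" := (@Complex _ x 0) : ring_scope.
Definition nc z : F := Re `|z|.
Lemma ReD z w : Re (z + w) = Re z + Re w. Proof. by case: z; case: w. Qed.
Lemma ImD z w : Im (z + w) = Im z + Im w. Proof. by case: z; case: w. Qed.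
Lemma ReN z : Re (- z) = - Re z. Proof. by case: z. Qed.
Lemma ImN z : Im (- z) = - Im z. Proof. by case: z. Qed.
Lemma conjE (a b : F) : (Complex a b)^* = Complex a (-b). Proof. by []. Qed.
Lemma ReM z w : Re (z * w) = Re z * Re w - Im z * Im w. Proof. by case: z; case: w. Qed.
Lemma ImM z w : Im (z * w) = Re z * Im w + Im z * Re w.
Proof. case: z => a b; case: w => c d /=. ring. Qed.
Lemma ReJ z : Re (z^*) = Re z. Proof. by case: z. Qed.
Lemma ImJ z : Im (z^*) = - Im z. Proof. by case: z. Qed.
Lemma ReR (r : F) : Re (r%:C) = r. Proof. by []. Qed.
Lemma ImR (r : F) : Im (r%:C) = 0. Proof. by []. Qed.
Lemma nc_def z : nc z = Num.sqrt (Re z ^+ 2 + Im z ^+ 2).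
Proof. by rewrite /nc normc_def. Qed.
Lemma nc_ge0 z : 0 <= nc z. Proof. by rewrite nc_def sqrtr_ge0. Qed.
Lemma nc_sqr z : nc z ^+ 2 = Re z ^+ 2 + Im z ^+ 2.
Proof. by rewrite nc_def sqr_sqrtr // addr_ge0 // sqr_ge0. Qed.
Lemma normC_nc z : `|z| = (nc z)%:C.
Proof. by rewrite /nc normc_def. Qed.
Lemma ncD z w : nc (z + w) <= nc z + nc w.
Proof.
have := ler_normD z w; rewrite !normC_nc lecE => /andP[_].
by rewrite ReD.
Qed.
Lemma ncM z w : nc (z * w) = nc z * nc w.
Proof. rewrite {1}/nc normrM ReM !normC_nc /=. by rewrite mul0r subr0. Qed.
Lemma ncJ z : nc (z^*) = nc z.
Proof. by rewrite /nc norm_conjC. Qed.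
Lemma ncR (r : F) : nc (r%:C) = `|r|.
Proof. by rewrite nc_def ReR ImR expr0n /= addr0 sqrtr_sqr. Qed.
Lemma ncN z : nc (- z) = nc z. Proof. by rewrite /nc normrN. Qed.
Lemma sqr_le_ge0 (a b : F) : 0 <= b -> a ^+ 2 <= b ^+ 2 -> a <= b.
Proof. move=> hb h; case: (lerP a 0) => ha; first by apply: le_trans hb. nra. Qed.
Lemma sqrt_le_l (x y : F) : 0 <= y -> x <= y ^+ 2 -> Num.sqrt x <= y.
Proof.
move=> hy hx; apply: sqr_le_ge0 => //.
case: (lerP x 0) => h0; first by rewrite ler0_sqrtr // expr0n /= sqr_ge0.
by rewrite sqr_sqrtr // ltW.
Qed.
Lemma sqrt_ge_r (x y : F) : 0 <= x -> x ^+ 2 <= y -> x <= Num.sqrt y.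
Proof.
move=> hx h; apply: sqr_le_ge0; first exact: sqrtr_ge0.
rewrite sqr_sqrtr //; apply: le_trans h; exact: sqr_ge0.
Qed.
Lemma Re_le_nc z : Re z <= nc z.
Proof.
case: (lerP (Re z) 0) => h; first by apply: le_trans h (nc_ge0 _).
apply: sqr_le_ge0; first exact: nc_ge0.
rewrite nc_sqr; have := sqr_ge0 (Im z); lra.
Qed.
Lemma nc_eq0 z : nc z = 0 -> z = 0.
Proof. by move=> h; apply/eqP; rewrite -normr_eq0 normC_nc h. Qed.
Lemma nc_le_sqr z (t : F) : 0 <= t -> nc z ^+ 2 <= t ^+ 2 -> nc z <= t.
Proof. by move=> ht; apply: sqr_le_ge0. Qed.
End C.

Lemma RLm {F : realType} (m p qn n1 n2 M a : F) :
  0 <= m -> 0 <= p -> 0 <= qn -> 0 <= n1 -> 0 <= n2 -> 0 <= M -> 0 <= a ->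
  n1 ^+ 2 + n2 ^+ 2 = 1 -> m <= n1 * p -> m <= M * n1 ^+ 2 ->
  p ^+ 2 + qn ^+ 2 <= a * n1 ^+ 2 -> m + n2 * qn <= 2^-1 * (M + Num.sqrt a).
Proof.
move=> hm hp hq h1 h2 hM ha hn hmp hmM hpq.
have hs := sqrtr_ge0 a; have hs2 : Num.sqrt a ^+ 2 = a by rewrite sqr_sqrtr.
set s := Num.sqrt a in hs hs2 *.
case: (ltrP 0 n1) => hn1; last first.
  have n10 : n1 = 0 by apply: le_anti; rewrite hn1 h1.
  rewrite n10 in hmp hmM hpq.
  have m0 : m = 0 by apply: le_anti; rewrite hm andbT; move: hmp; rewrite mul0r.
  have q0 : qn = 0.
    apply: le_anti; rewrite hq andbT; apply: sqr_le_ge0 => //.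
    rewrite expr0n /=; move: hpq; rewrite expr0n /= mulr0.
    have := sqr_ge0 p; lra.
  rewrite m0 q0 mulr0 addr0; apply: mulr_ge0; [by rewrite invr_ge0 | exact: addr_ge0].
have hX : m ^+ 2 <= n1 ^+ 2 * p ^+ 2.
  rewrite -exprMn; nra.
have hXY : m ^+ 2 + (n1 * qn) ^+ 2 <= (n1 ^+ 2 * s) ^+ 2.
  rewrite exprMn [(n1 ^+ 2 * s) ^+ 2]exprMn hs2.
  have : n1 ^+ 2 * (p ^+ 2 + qn ^+ 2) <= n1 ^+ 2 * (a * n1 ^+ 2).
    by rewrite ler_wpM2l // sqr_ge0.
  have e : (n1 ^+ 2) ^+ 2 * a = n1 ^+ 2 * (a * n1 ^+ 2) by ring.
  rewrite e; lra.
set c := n1 ^+ 2 - n2 ^+ 2; set d := 2%:R * n1 * n2.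
have hcd : c ^+ 2 + d ^+ 2 = 1.
  have e : c ^+ 2 + d ^+ 2 = (n1 ^+ 2 + n2 ^+ 2) ^+ 2 by rewrite /c /d; ring.
  by rewrite e hn expr1n.
have hCS : (m * c + n1 * qn * d) ^+ 2 <= (n1 ^+ 2 * s) ^+ 2.
  apply: le_trans hXY.
  have e : (m ^+ 2 + (n1 * qn) ^+ 2) = (m ^+ 2 + (n1 * qn) ^+ 2) * (c ^+ 2 + d ^+ 2) by rewrite hcd mulr1.
  rewrite e.
  have e2 : (m ^+ 2 + (n1 * qn) ^+ 2) * (c ^+ 2 + d ^+ 2) - (m * c + n1 * qn * d) ^+ 2 = (m * d - n1 * qn * c) ^+ 2 by ring.
  rewrite -subr_ge0 e2; exact: sqr_ge0.
have h3 : m * c + n1 * qn * d <= n1 ^+ 2 * s.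
  by apply: sqr_le_ge0 => //; rewrite mulr_ge0 // sqr_ge0.
have h4 : 2%:R * (m + n2 * qn) * n1 ^+ 2 <= (M + s) * n1 ^+ 2.
  have e : 2%:R * (m + n2 * qn) * n1 ^+ 2 = m * (n1 ^+ 2 + n2 ^+ 2) + (m * c + n1 * qn * d) by rewrite /c /d; ring.
  rewrite e hn mulr1 mulrDl; lra.
have hn2 : 0 < n1 ^+ 2 by rewrite exprn_gt0.
rewrite ler_pM2r // in h4.
have e : 2^-1 * (M + s) = (M + s) / 2%:R by rewrite mulrC.
rewrite e ler_pdivlMr //; lra.
Qed.

Lemma sup_ge0' {F : realType} (E : set F) : (forall e, E e -> 0 <= e) -> 0 <= sup E.
Proof.
move=> H; case: (pselect (has_sup E)) => hs; last by rewrite sup_out.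
case: (hs) => [[e he] _]; apply: le_trans (H _ he) _; exact: sup_upper_bound.
Qed.

Section Sesq.
Context {F : realType}.
Local Notation C := F[i].
Local Notation Re := complex.Re.
Local Notation Im := complex.Im.
Local Notation "x %:C" := (@Complex _ x 0) : ring_scope.
Local Notation ii := (@Complex F 0 1).
Context {W : lmodType C}.
Definition sesq (d : W -> W -> C) :=
  (forall a x y z, d (a *: x + y) z = a * d x z + d y z) /\
  (forall a x y z, d z (a *: x + y) = a^* * d z x + d z y).
Lemma cext (z w : C) : Re z = Re w -> Im z = Im w -> z = w.
Proof. by case: z; case: w => /= ? ? ? ? -> ->. Qed.
Lemma iiJ : ii^* = - ii. Proof. by apply: cext => /=; rewrite ?oppr0. Qed.
Lemma iiM : ii * ii = -1. Proof. apply: cext; rewrite ?ReM ?ImM /= ?oppr0; ring. Qed.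
Lemma iiJM : ii * ii^* = 1. Proof. by rewrite iiJ mulrN iiM opprK. Qed.
Lemma cN1 : (-1 : C)^* = -1. Proof. by apply: cext => /=; rewrite ?oppr0. Qed.
Lemma ciN : (-ii)^* = ii. Proof. by apply: cext => /=; rewrite ?oppr0 ?opprK. Qed.
Definition Dg (d : W -> W -> C) x y c := d (x + c *: y) (x + c *: y).
Section D.
Variable d : W -> W -> C.
Hypothesis hd : sesq d.
Lemma d0l z : d 0 z = 0.
Proof.
have := hd.1 1 0 0 z; rewrite scaler0 addr0 mul1r => h.
by apply: (@addrI _ (d 0 z)); rewrite addr0 -h.
Qed.
Lemma d0r z : d z 0 = 0.
Proof.
have := hd.2 1 0 0 z; rewrite scaler0 addr0 conjC1 mul1r => h.
by apply: (@addrI _ (d z 0)); rewrite addr0 -h.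
Qed.
Lemma dDl x y z : d (x + y) z = d x z + d y z.
Proof. by rewrite -[x in LHS]scale1r hd.1 mul1r. Qed.
Lemma dZl a x z : d (a *: x) z = a * d x z.
Proof. by rewrite -[a *: x]addr0 hd.1 d0l addr0. Qed.
Lemma dDr x y z : d z (x + y) = d z x + d z y.
Proof. by rewrite -[x in LHS]scale1r hd.2 conjC1 mul1r. Qed.
Lemma dZr a x z : d z (a *: x) = a^* * d z x.
Proof. by rewrite -[a *: x]addr0 hd.2 d0r addr0. Qed.
Lemma dNl x z : d (- x) z = - d x z.
Proof. by rewrite -scaleN1r dZl mulN1r. Qed.
Lemma dNr x z : d z (- x) = - d z x.
Proof. by rewrite -scaleN1r dZr rmorphN1 mulN1r. Qed.
Lemma dexp x y c : d (x + c *: y) (x + c *: y) =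
  d x x + c^* * d x y + c * d y x + c * c^* * d y y.
Proof. rewrite !dDl !dDr !dZl !dZr; ring. Qed.
Lemma dscale c x : d (c *: x) (c *: x) = c * c^* * d x x.
Proof. rewrite dZl dZr; ring. Qed.
Lemma polar x y : 4%:R * d x y = (Dg d x y 1 - Dg d x y (-1)) + ii * (Dg d x y ii - Dg d x y (-ii)).
Proof.
rewrite /Dg !dexp cN1 ciN conjC1 iiJ.
apply/eqP; rewrite -subr_eq0; apply/eqP.
transitivity ((1 + ii * ii) * (2%:R * d x y - 2%:R * d y x)); first ring.
by rewrite iiM subrr mul0r.
Qed.
End D.
Lemma nc_ii : nc ii = 1.
Proof. by rewrite nc_def /= expr0n /= add0r expr1n sqrtr1. Qed.
Lemma nc4 (z : C) : nc (4%:R * z) = 4%:R * nc z.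
Proof.
have -> : (4%:R : C) = Complex 4%:R 0 by rewrite -(rmorph_nat (real_complex F)).
by rewrite ncM; congr (_ * _); rewrite ncR ger0_norm.
Qed.
Lemma polar_bound (d : W -> W -> C) (hd : sesq d) (e : W -> W -> C) (he : sesq e) (w : F) :
  (forall z, nc (d z z) <= w * Re (e z z)) ->
  forall x y, nc (d x y) <= w * (Re (e x x) + Re (e y y)).
Proof.
move=> H x y.
have hsum : Dg e x y 1 + Dg e x y (-1) + Dg e x y ii + Dg e x y (-ii)
   = 4%:R * (e x x + e y y).
  rewrite /Dg !(dexp e he) cN1 ciN conjC1 iiJ.
  apply/eqP; rewrite -subr_eq0; apply/eqP.
  transitivity ((1 + ii * ii) * (-2%:R * e y y)); first ring.
  by rewrite iiM subrr mul0r.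
have h4 : 4%:R * nc (d x y) <= 4%:R * (w * (Re (e x x) + Re (e y y))).
  rewrite -nc4 (polar d hd).
  have -> : 4%:R * (w * (Re (e x x) + Re (e y y))) =
    w * Re (Dg e x y 1) + w * Re (Dg e x y (-1)) + w * Re (Dg e x y ii) + w * Re (Dg e x y (-ii)).
    rewrite -!mulrDr -!ReD hsum ReM /= ReD; ring.
  apply: le_trans (ncD _ _) _.
  rewrite ncM nc_ii mul1r.
  apply: le_trans (lerD (ncD _ _) (ncD _ _)) _.
  rewrite !ncN -!addrA; apply: lerD; first exact: H.
  apply: lerD; first exact: H.
  apply: lerD; exact: H.
by rewrite ler_pM2l // in h4.
Qed.
End Sesq.
Arguments d0l {F W d}. Arguments d0r {F W d}. Arguments dDl {F W d}. Arguments dZl {F W d}. Arguments dDr {F W d}. Arguments dZr {F W d}.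
Arguments dNl {F W d}. Arguments dNr {F W d}. Arguments dexp {F W d}. Arguments dscale {F W d}. Arguments polar {F W d}.

Lemma sesqB {F : realType} {W : lmodType F[i]} (d e : W -> W -> F[i]) :
  sesq d -> sesq e -> sesq (fun x y => d x y - e x y).
Proof.
move=> [d1 d2] [e1 e2]; split=> a x y z; rewrite ?d1 ?e1 ?d2 ?e2; ring.
Qed.

Lemma ge0_C {F : realType} {z : F[i]} : 0 <= z -> z = Complex (complex.Re z) 0.
Proof. move=> h; apply: cext => //=; exact: ger0_Im. Qed.
Lemma ge0_Re {F : realType} {z : F[i]} : 0 <= z -> 0 <= complex.Re z.
Proof. by rewrite lecE => /andP[]. Qed.

Lemma cs_real {F : realType} (p q K : F) : 0 <= p -> 0 <= q -> 0 <= K ->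
  (forall t, 0 <= p - 2%:R * t * K + t ^+ 2 * K * q) -> K <= p * q.
Proof.
move=> hp hq hK H.
case: (ltrP 0 q) => hq0.
  have := H q^-1.
  have e : p - 2%:R * q^-1 * K + q^-1 ^+ 2 * K * q = (p * q - K) / q.
    by field; rewrite gt_eqF.
  rewrite e pmulr_lge0 ?invr_gt0 // subr_ge0 //.
have q0 : q = 0 by apply: le_anti; rewrite hq0 hq.
case: (ltrP 0 K) => hK0; last by rewrite q0 mulr0.
have := H ((p + 1) / (2%:R * K)).
have e : p - 2%:R * ((p + 1) / (2%:R * K)) * K + ((p + 1) / (2%:R * K)) ^+ 2 * K * q = -1.
  by rewrite q0 mulr0 addr0; field; rewrite gt_eqF.
by rewrite e ler0N1.
Qed.

Section Main.
Variables (F : realType) (V : lmodType F[i]) (ip : V -> V -> F[i]) (A : V -> V).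
Local Notation C := F[i].
Local Notation Re := complex.Re.
Local Notation Im := complex.Im.
Local Notation "x %:C" := (@Complex _ x 0) : ring_scope.
Hypothesis ipL : forall a x y z, ip (a *: x + y) z = a * ip x z + ip y z.
Hypothesis ipC : forall x y, ip x y = (ip y x)^*.
Hypothesis ipD : forall x, ip x x = 0 -> x = 0.
Hypothesis AL : forall (a : C) x y, A (a *: x + y) = a *: A x + A y.
Hypothesis Apos : forall x, 0 <= ip (A x) x.

Lemma ip_sesq : sesq ip.
Proof.
split=> // a x y z; rewrite ipC ipL rmorphD rmorphM.
by rewrite [ip z x]ipC [ip z y]ipC.
Qed.
Lemma A0 : A 0 = 0.
Proof.
have := AL 1 0 0; rewrite scaler0 addr0 scale1r => h.
by apply: (@addrI _ (A 0)); rewrite addr0 -h.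
Qed.
Lemma AD x y : A (x + y) = A x + A y.
Proof. by rewrite -[x in LHS]scale1r AL scale1r. Qed.
Lemma AZ a x : A (a *: x) = a *: A x.
Proof. by rewrite -[a *: x]addr0 AL A0 addr0. Qed.
Definition h x y := ip (A x) y.
Lemma h_sesq : sesq h.
Proof.
split=> a x y z; rewrite /h ?AL; first by rewrite ipL.
by rewrite (ip_sesq.2).
Qed.
Lemma g_sesq : sesq (fun x y => ip x (A y)).
Proof.
split=> a x y z; first by rewrite ipL.
by rewrite AL (ip_sesq.2).
Qed.
Lemma selfadj x y : ip (A x) y = ip x (A y).
Proof.
set d := fun x y => ip (A x) y - ip x (A y).
have sd : sesq d by apply: sesqB; [exact: h_sesq | exact: g_sesq].
have H : forall z, nc (d z z) <= 0 * Re (d z z).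
  move=> z; rewrite mul0r /d.
  rewrite [ip z (A z)]ipC [ip (A z) z](ge0_C (Apos z)) conjE oppr0 subrr.
  by rewrite -(rmorph0 (real_complex F)) ncR normr0.
have := @polar_bound _ _ d sd d sd 0 H x y; rewrite mul0r => h0.
have : d x y = 0 by apply: nc_eq0; apply: le_anti; rewrite h0 nc_ge0.
by move/eqP; rewrite subr_eq0 => /eqP.
Qed.
Local Notation n := (normA ip A).
Definition na x := Re (h x x).
Lemma hC x y : h y x = (h x y)^*.
Proof. by rewrite /h ipC selfadj. Qed.
Lemma h_ge0 x : 0 <= h x x. Proof. exact: Apos. Qed.
Lemma hxx x : h x x = (na x)%:C. Proof. exact: ge0_C (h_ge0 x). Qed.
Lemma na_ge0 x : 0 <= na x. Proof. exact: ge0_Re (h_ge0 x). Qed.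
Lemma nE x : n x = Num.sqrt (na x). Proof. by []. Qed.
Lemma n_ge0 x : 0 <= n x. Proof. exact: sqrtr_ge0. Qed.
Lemma n_sqr x : n x ^+ 2 = na x. Proof. by rewrite nE sqr_sqrtr // na_ge0. Qed.
Ltac reim := rewrite ?(ReD, ImD, ReM, ImM, ReN, ImN, ReJ, ImJ) /=.
Lemma CS x y : nc (h x y) <= n x * n y.
Proof.
set c := h x y.
have H : forall t : F, 0 <= na x - 2%:R * t * (nc c ^+ 2) + t ^+ 2 * (nc c ^+ 2) * na y.
  move=> t.
  have := ge0_Re (h_ge0 (x + (- (t%:C * c)) *: y)).
  rewrite (dexp h_sesq) -/c [h y x]hC -/c !hxx.
  rewrite nc_sqr; case: c => a b.
  reim. move=> hh. apply: le_trans hh _. rewrite le_eqVlt; apply/orP; left; apply/eqP. ring.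
apply: sqr_le_ge0; first by apply: mulr_ge0; apply: n_ge0.
rewrite exprMn !n_sqr; apply: cs_real => //; try apply: na_ge0; exact: sqr_ge0.
Qed.
Lemma n_scale c x : n (c *: x) = nc c * n x.
Proof.
have e : na (c *: x) = nc c ^+ 2 * na x.
  rewrite /na (dscale h_sesq) hxx nc_sqr; case: c => a b; reim; ring.
rewrite !nE e sqrtrM ?sqr_ge0 // sqrtr_sqr ger0_norm //; exact: nc_ge0.
Qed.
Lemma na_scale c x : na (c *: x) = nc c ^+ 2 * na x.
Proof. by rewrite -!n_sqr n_scale exprMn. Qed.
Lemma n_tri x y : n (x + y) <= n x + n y.
Proof.
rewrite {1}nE; apply: sqrt_le_l; first by apply: addr_ge0; apply: n_ge0.
have e : na (x + y) = na x + na y + 2%:R * Re (h x y).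
  rewrite /na (dDl h_sesq) !(dDr h_sesq) [h y x]hC; reim; ring.
rewrite e sqrrD !n_sqr.
have := CS x y; have := Re_le_nc (h x y).
rewrite -mulr_natl; lra.
Qed.
Lemma n0 : n 0 = 0.
Proof. by rewrite nE /na (d0l h_sesq) /= sqrtr0. Qed.
Lemma n_eqA u v : A u = A v -> n u = n v.
Proof.
move=> e; rewrite !nE /na /h.
have -> : ip (A u) u = ip (A v) v by rewrite selfadj e -selfadj e.
done.
Qed.
Section Sharp.
Variables T X : V -> V.
Hypothesis hs : forall x z, ip z (A (X x)) = ip (T z) (A x).
Lemma sharp_h x z : h z (X x) = h (T z) x.
Proof. by rewrite /h selfadj hs selfadj. Qed.
Lemma sharp_hom c x : n (X (c *: x)) = nc c * n (X x).
Proof.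
rewrite -n_scale; apply: n_eqA.
set u := A (X (c *: x)) - A (c *: X x).
have : ip u u = 0.
  rewrite {2}/u (dDr ip_sesq) (dNr ip_sesq) hs AZ (dZr ip_sesq) AZ (dZr ip_sesq) hs.
  by rewrite subrr.
by move/ipD/eqP; rewrite subr_eq0 => /eqP.
Qed.
End Sharp.
Section Lin.
Variable T : V -> V.
Hypothesis TL : forall (a : C) x y, T (a *: x + y) = a *: T x + T y.
Lemma lin0 : T 0 = 0.
Proof.
have := TL 1 0 0; rewrite scaler0 addr0 scale1r => e.
by apply: (@addrI _ (T 0)); rewrite addr0 -e.
Qed.
Lemma linD x y : T (x + y) = T x + T y.
Proof. by rewrite -[x in LHS]scale1r TL scale1r. Qed.
Lemma linZ a x : T (a *: x) = a *: T x.
Proof. by rewrite -[a *: x]addr0 TL lin0 addr0. Qed.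
End Lin.

Lemma rl_bound (q m w : F) : 0 <= q -> 0 <= m -> 0 <= w ->
  (forall t, 0 <= t -> t * q ^+ 2 <= w * (m ^+ 2 + t ^+ 2 * q ^+ 2)) -> q <= 2%:R * w * m.
Proof.
move=> hq hm hw H.
case: (ltrP 0 q) => hq0; last first.
  have -> : q = 0 by apply: le_anti; rewrite hq0 hq.
  by rewrite !mulr_ge0.
case: (ltrP 0 m) => hm0.
  have := H (m / q) (divr_ge0 hm hq).
  have e1 : m / q * q ^+ 2 = m * q by field; rewrite gt_eqF.
  have e2 : (m / q) ^+ 2 * q ^+ 2 = m ^+ 2 by field; rewrite gt_eqF.
  rewrite e1 e2 => h1; nra.
have m0 : m = 0 by apply: le_anti; rewrite hm0 hm.
set t := (w + 1)^-1.
have ht0 : 0 < t by rewrite invr_gt0 ltr_wpDl.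
have ht : t * (w + 1) = 1 by rewrite mulVf // gt_eqF // ltr_wpDl.
have := H t (ltW ht0); rewrite m0 expr0n /= add0r => h1.
have h2 : 0 < q ^+ 2 * t ^+ 2 by rewrite mulr_gt0 // exprn_gt0.
nra.
Qed.
Section Ops.
Variables P Q R S : V -> V.
Hypothesis PL : forall (a : C) x y, P (a *: x + y) = a *: P x + P y.
Hypothesis QL : forall (a : C) x y, Q (a *: x + y) = a *: Q x + Q y.
Hypothesis RL : forall (a : C) x y, R (a *: x + y) = a *: R x + R y.
Hypothesis SL : forall (a : C) x y, S (a *: x + y) = a *: S x + S y.
Definition Bf (z z' : V * V) := h (P z.1 + Q z.2) z'.1 + h (R z.1 + S z.2) z'.2.
Definition Df (z z' : V * V) := h z.1 z'.1 + h z.2 z'.2.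
Lemma Bf_sesq : sesq Bf.
Proof.
split=> a x y z; rewrite /Bf /=.
  rewrite PL QL RL SL !(dDl h_sesq) !(dZl h_sesq); ring.
rewrite !(dDr h_sesq) !(dZr h_sesq); ring.
Qed.
Lemma Df_sesq : sesq Df.
Proof.
split=> a x y z; rewrite /Df /=.
  rewrite !(dDl h_sesq) !(dZl h_sesq); ring.
rewrite !(dDr h_sesq) !(dZr h_sesq); ring.
Qed.
Lemma ReDf z : Re (Df z z) = na z.1 + na z.2.
Proof. by rewrite /Df ReD. Qed.
Variable w : F.
Hypothesis hw0 : 0 <= w.
Hypothesis Hw : forall z : V * V, n z.1 ^+ 2 + n z.2 ^+ 2 = 1 -> nc (Bf z z) <= w.
Lemma Bf_diag z : nc (Bf z z) <= w * Re (Df z z).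
Proof.
rewrite ReDf; set N := na z.1 + na z.2.
have hN0 : 0 <= N by rewrite addr_ge0 // na_ge0.
case: (ltrP 0 N) => hN; last first.
  have N0 : N = 0 by apply: le_anti; rewrite hN hN0.
  have h1 : n z.1 = 0.
    rewrite nE; have := na_ge0 z.1; have := na_ge0 z.2; rewrite -/N in N0 * => a b.
    have -> : na z.1 = 0 by rewrite /N in N0; lra.
    exact: sqrtr0.
  have h2 : n z.2 = 0.
    rewrite nE; have := na_ge0 z.1; have := na_ge0 z.2 => a b.
    have -> : na z.2 = 0 by rewrite /N in N0; lra.
    exact: sqrtr0.
  rewrite N0 mulr0 /Bf; apply: le_trans (ncD _ _) _.
  have := CS (P z.1 + Q z.2) z.1; have := CS (R z.1 + S z.2) z.2.
  rewrite h1 h2 !mulr0; lra.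
set r := (Num.sqrt N)^-1.
have hr : 0 < r by rewrite invr_gt0 sqrtr_gt0.
have r2 : r ^+ 2 = N^-1 by rewrite /r exprVn sqr_sqrtr.
have := Hw ((r%:C) *: z).
have -> : ((r%:C) *: z).1 = r%:C *: z.1 by [].
have -> : ((r%:C) *: z).2 = r%:C *: z.2 by [].
rewrite !n_scale ncR ger0_norm ?(ltW hr) // !exprMn !n_sqr -mulrDr -/N r2 mulVf ?gt_eqF //.
move/(_ erefl).
rewrite (dscale (Bf_sesq)) !ncM ncJ ncR ger0_norm ?(ltW hr) // -expr2 r2.
move=> hh.
have : N^-1 * nc (Bf z z) <= N^-1 * (w * N) by rewrite mulrCA mulVf ?gt_eqF // mulr1.
by rewrite ler_pM2l // invr_gt0.
Qed.
Lemma Bf_polar a b : nc (Bf a b) <= w * (Re (Df a a) + Re (Df b b)).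
Proof. exact: (@polar_bound _ _ Bf Bf_sesq Df Df_sesq w Bf_diag a b). Qed.
Lemma na0 : na 0 = 0. Proof. by rewrite -n_sqr n0 expr0n. Qed.
Ltac spec a b := have := Bf_polar a b; rewrite /Bf !ReDf /= ?(lin0 _ PL) ?(lin0 _ QL) ?(lin0 _ RL) ?(lin0 _ SL)
   ?(d0r h_sesq) ?na0 ?addr0 ?add0r.
Lemma boundP x y : nc (h (P x) y) <= w * (na x + na y).
Proof. by spec (x, 0 : V) (y, 0 : V). Qed.
Lemma boundQ x y : nc (h (Q x) y) <= w * (na x + na y).
Proof. by spec (0 : V, x) (y, 0 : V). Qed.
Lemma boundR x y : nc (h (R x) y) <= w * (na x + na y).
Proof. by spec (x, 0 : V) (0 : V, y). Qed.
Lemma boundS x y : nc (h (S x) y) <= w * (na x + na y).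
Proof. by spec (0 : V, x) (0 : V, y). Qed.
Lemma op_bound (T : V -> V) (TL : forall (a : C) x y, T (a *: x + y) = a *: T x + T y)
  (HT : forall x y, nc (h (T x) y) <= w * (na x + na y)) x : n (T x) <= 2%:R * w * n x.
Proof.
apply: rl_bound; rewrite ?n_ge0 //.
move=> t ht; have := HT x (t%:C *: T x).
rewrite (dZr h_sesq) ncM ncJ ncR ger0_norm // hxx ncR ger0_norm ?na_ge0 //.
by rewrite na_scale ncR ger0_norm // -!n_sqr.
Qed.
Lemma sharp_bound (T X : V -> V) (hs : forall x z, ip z (A (X x)) = ip (T z) (A x))
  (c : F) (hc : 0 <= c) (HT : forall v, n (T v) <= c * n v) y : n (X y) <= c * n y.
Proof.
have h1 : n (X y) ^+ 2 <= c * n (X y) * n y.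
  rewrite n_sqr /na (sharp_h _ _ hs); apply: le_trans (Re_le_nc _) _.
  apply: le_trans (CS _ _) _; apply: ler_wpM2r; [exact: n_ge0 | exact: HT].
have := n_ge0 (X y); have := n_ge0 y => hy hx.
case: (ltrP 0 (n (X y))) => hp; last first.
  have -> : n (X y) = 0 by apply: le_anti; rewrite hp hx.
  exact: mulr_ge0.
nra.
Qed.
Lemma opn_ub (T : V -> V) K (hb : forall x, n x = 1 -> n (T x) <= K) x :
  n x = 1 -> n (T x) <= opnormA ip A T.
Proof.
move=> hx; apply: ub_le_sup; last by exists x.
by exists K => e [y hy <-]; apply: hb.
Qed.
Lemma opn_ge0 (T : V -> V) : 0 <= opnormA ip A T.
Proof. apply: sup_ge0' => e [y _ <-]; exact: n_ge0. Qed.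
Lemma omg_ge0 (T : V -> V) : 0 <= omegaA ip A T.
Proof. apply: sup_ge0' => e [y _ <-]; exact: nc_ge0. Qed.
Lemma nrm1 y (hy : 0 < n y) : n ((n y)^-1%:C *: y) = 1.
Proof. by rewrite n_scale ncR ger0_norm ?invr_ge0 ?n_ge0 // mulVf // gt_eqF. Qed.
Lemma ny_cases y : n y = 0 \/ 0 < n y.
Proof. by case: (ltrP 0 (n y)) => h; [right | left; apply: le_anti; rewrite h n_ge0]. Qed.
Lemma scale_inv y (hy : 0 < n y) : n y * (n y)^-1 = 1.
Proof. by rewrite mulfV // gt_eqF. Qed.
Lemma T_opn (T : V -> V) (TL : forall (a : C) x y, T (a *: x + y) = a *: T x + T y)
  (c : F) (hc : 0 <= c) (HT : forall v, n (T v) <= c * n v) y :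
  n (T y) <= opnormA ip A T * n y.
Proof.
case: (ny_cases y) => hy.
  by rewrite hy mulr0; have := HT y; rewrite hy mulr0.
have hb : forall x, n x = 1 -> n (T x) <= c by move=> x hx; apply: le_trans (HT x) _; rewrite hx mulr1.
have := @opn_ub T c hb _ (nrm1 _ hy).
rewrite (linZ _ TL) n_scale ncR ger0_norm ?invr_ge0 ?n_ge0 // => H.
have := ler_wpM2l (n_ge0 y) H; rewrite mulrA (scale_inv _ hy) mul1r mulrC //.
Qed.
Lemma omg_ub (T : V -> V) K (hb : forall x, n x = 1 -> nc (h (T x) x) <= K) x :
  n x = 1 -> nc (h (T x) x) <= omegaA ip A T.
Proof.
move=> hx; apply: ub_le_sup; last by exists x.
by exists K => e [y hy <-]; apply: hb.
Qed.
Lemma T_omg (T : V -> V) (TL : forall (a : C) x y, T (a *: x + y) = a *: T x + T y)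
  (c : F) (hc : 0 <= c) (HT : forall v, n (T v) <= c * n v) y :
  nc (h (T y) y) <= omegaA ip A T * n y ^+ 2.
Proof.
case: (ny_cases y) => hy.
  rewrite hy expr0n /= mulr0; apply: le_trans (CS _ _) _; by rewrite hy mulr0.
have hb : forall x, n x = 1 -> nc (h (T x) x) <= c.
  move=> x hx; apply: le_trans (CS _ _) _; rewrite hx mulr1; apply: le_trans (HT x) _.
  by rewrite hx mulr1.
have := @omg_ub T c hb _ (nrm1 _ hy).
rewrite (linZ _ TL) (dZl h_sesq) (dZr h_sesq) !ncM ncJ ncR ger0_norm ?invr_ge0 ?n_ge0 // => H.
have := ler_wpM2l (sqr_ge0 (n y)) H.
have e : n y ^+ 2 * ((n y)^-1 * ((n y)^-1 * nc (h (T y) y))) = nc (h (T y) y) by field; rewrite gt_eqF.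
by rewrite e mulrC.
Qed.
Lemma quad_bound (G1 G2 : V -> V) (phi1 phi2 : V -> F) (c : F) (hc : 0 <= c) (K1 K2 : F)
  (hG1 : forall y, Re (h (G1 y) y) = phi1 y) (hG2 : forall y, Re (h (G2 y) y) = phi2 y)
  (hom1 : forall (r : F) y, 0 < r -> phi1 ((r%:C) *: y) = r ^+ 2 * phi1 y)
  (hom2 : forall (r : F) y, 0 < r -> phi2 ((r%:C) *: y) = r ^+ 2 * phi2 y)
  (z01 : forall y, n y = 0 -> phi1 y = 0) (z02 : forall y, n y = 0 -> phi2 y = 0)
  (b1 : forall y, n y = 1 -> n (G1 y) <= K1) (b2 : forall y, n y = 1 -> n (G2 y) <= K2) y :
  c * phi1 y + phi2 y <= opnormA ip A (fun x => rC c *: G1 x + G2 x) * n y ^+ 2.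
Proof.
case: (ny_cases y) => hy.
  by rewrite z01 // z02 // hy expr0n /= !mulr0 addr0.
set r := (n y)^-1.
have hr : 0 < r by rewrite invr_gt0.
set u := r%:C *: y.
have hu : n u = 1 := nrm1 _ hy.
have hM : forall x, n x = 1 -> n (rC c *: G1 x + G2 x) <= c * K1 + K2.
  move=> x hx; apply: le_trans (n_tri _ _) _; rewrite n_scale /rC ncR ger0_norm //.
  apply: lerD; [apply: ler_wpM2l => //; exact: b1 | exact: b2].
have H := @opn_ub _ _ hM _ hu.
have e : c * phi1 u + phi2 u = Re (h (rC c *: G1 u + G2 u) u).
  rewrite (dDl h_sesq) (dZl h_sesq) ReD ReM -hG1 -hG2 /rC /=; ring.
have H2 : c * phi1 u + phi2 u <= opnormA ip A (fun x => rC c *: G1 x + G2 x).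
  rewrite e; apply: le_trans (Re_le_nc _) _; apply: le_trans (CS _ _) _.
  by rewrite hu mulr1.
rewrite /u hom1 // hom2 // in H2.
have e2 : c * phi1 y + phi2 y = n y ^+ 2 * (c * (r ^+ 2 * phi1 y) + r ^+ 2 * phi2 y).
  by rewrite /r; field; rewrite gt_eqF.
rewrite e2 mulrC; apply: ler_wpM2r => //; exact: sqr_ge0.
Qed.
Variables Ps Qs Rs : V -> V.
Hypothesis hPs : forall x z, ip z (A (Ps x)) = ip (P z) (A x).
Hypothesis hQs : forall x z, ip z (A (Qs x)) = ip (Q z) (A x).
Hypothesis hRs : forall x z, ip z (A (Rs x)) = ip (R z) (A x).
Variable lam : F.
Hypothesis hl0 : 0 <= lam.
Hypothesis hl1 : lam <= 1.
Lemma main_elem z (hz : n z.1 ^+ 2 + n z.2 ^+ 2 = 1) :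
  nc (Bf z z) <= 2^-1 * (opnormA ip A P + 2%:R * omegaA ip A S
      + Num.sqrt (opnormA ip A (fun x => rC (lam ^+ 2) *: P (Ps x) + Q (Qs x)))
      + Num.sqrt (opnormA ip A (fun x => rC ((1 - lam) ^+ 2) *: P (Ps x) + Rs (R x)))).
Proof.
case: z hz => x1 x2 /= hz.
set cb := 2%:R * w.
have hcb : 0 <= cb by rewrite mulr_ge0.
have nP : forall v, n (P v) <= cb * n v := op_bound _ PL boundP.
have nQ : forall v, n (Q v) <= cb * n v := op_bound _ QL boundQ.
have nR : forall v, n (R v) <= cb * n v := op_bound _ RL boundR.
have nS : forall v, n (S v) <= cb * n v := op_bound _ SL boundS.
have nPs : forall v, n (Ps v) <= cb * n v := sharp_bound _ _ hPs _ hcb nP.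
have nQs : forall v, n (Qs v) <= cb * n v := sharp_bound _ _ hQs _ hcb nQ.
have nRs : forall v, n (Rs v) <= cb * n v := sharp_bound _ _ hRs _ hcb nR.
set oP := opnormA ip A P; set oS := omegaA ip A S.
set a := opnormA ip A _; set b := opnormA ip A (fun x => rC ((1 - lam) ^+ 2) *: P (Ps x) + Rs (R x)).
set mP := nc (h (P x1) x1).
have hmP1 : mP <= n x1 * n (Ps x1) by rewrite /mP -(sharp_h _ _ hPs); exact: CS.
have hmP2 : mP <= oP * n x1 ^+ 2.
  apply: le_trans (CS _ _) _; rewrite expr2 mulrA; apply: ler_wpM2r; first exact: n_ge0.
  exact: (T_opn _ PL _ hcb nP x1).
have hq : nc (h (Q x2) x1) <= n x2 * n (Qs x1) by rewrite -(sharp_h _ _ hQs); exact: CS.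
have hr : nc (h (R x1) x2) <= n (R x1) * n x2 by exact: CS.
have hs : nc (h (S x2) x2) <= oS * n x2 ^+ 2 by exact: (T_omg _ SL _ hcb nS x2).
have z0 : forall (T : V -> V) y, (forall v, n (T v) <= cb * n v) -> n y = 0 -> n (T y) ^+ 2 = 0.
  move=> T y HT hy; have := HT y; rewrite hy mulr0 => h1.
  have -> : n (T y) = 0 by apply: le_anti; rewrite h1 n_ge0.
  by rewrite expr0n.
have homS : forall (T X : V -> V) (hs : forall x z, ip z (A (X x)) = ip (T z) (A x)) (r : F) y,
    0 < r -> n (X ((r%:C) *: y)) ^+ 2 = r ^+ 2 * n (X y) ^+ 2.
  by move=> T X hs0 r y hr0; rewrite (sharp_hom _ _ hs0) ncR ger0_norm ?ltW // exprMn.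
have hG : forall (T X : V -> V) (hs : forall x z, ip z (A (X x)) = ip (T z) (A x)) y,
    Re (h (T (X y)) y) = n (X y) ^+ 2.
  by move=> T X hs0 y; rewrite -(sharp_h _ _ hs0) n_sqr.
have bb : forall (T X : V -> V) y, (forall v, n (T v) <= cb * n v) ->
    (forall v, n (X v) <= cb * n v) -> n y = 1 -> n (T (X y)) <= cb * cb.
  move=> T X y HT HX hy; apply: le_trans (HT _) _; apply: ler_wpM2l => //.
  by apply: le_trans (HX _) _; rewrite hy mulr1.
have ha : lam ^+ 2 * n (Ps x1) ^+ 2 + n (Qs x1) ^+ 2 <= a * n x1 ^+ 2.
  apply: (@quad_bound (fun y => P (Ps y)) (fun y => Q (Qs y)) (fun y => n (Ps y) ^+ 2)
     (fun y => n (Qs y) ^+ 2) (lam ^+ 2) _ (cb * cb) (cb * cb)).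
  - exact: sqr_ge0.
  - exact: hG hPs.
  - exact: hG hQs.
  - exact: homS hPs.
  - exact: homS hQs.
  - by move=> y; apply: (z0 _ _ nPs).
  - by move=> y; apply: (z0 _ _ nQs).
  - by move=> y; apply: (bb _ _ _ nP nPs).
  - by move=> y; apply: (bb _ _ _ nQ nQs).
have hb : (1 - lam) ^+ 2 * n (Ps x1) ^+ 2 + n (R x1) ^+ 2 <= b * n x1 ^+ 2.
  apply: (@quad_bound (fun y => P (Ps y)) (fun y => Rs (R y)) (fun y => n (Ps y) ^+ 2)
     (fun y => n (R y) ^+ 2) ((1 - lam) ^+ 2) _ (cb * cb) (cb * cb)).
  - exact: sqr_ge0.
  - exact: hG hPs.
  - by move=> y; rewrite hC (sharp_h _ _ hRs) ReJ n_sqr.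
  - exact: homS hPs.
  - by move=> r y hr0; rewrite (linZ _ RL) n_scale ncR ger0_norm ?ltW // exprMn.
  - by move=> y; apply: (z0 _ _ nPs).
  - by move=> y; apply: (z0 _ _ nR).
  - by move=> y; apply: (bb _ _ _ nP nPs).
  - by move=> y; apply: (bb _ _ _ nRs nR).
have hoP := opn_ge0 P; have hoS := omg_ge0 S.
have ha0 : 0 <= a by exact: opn_ge0. have hb0 : 0 <= b by exact: opn_ge0.
have hn1 := n_ge0 x1; have hn2 := n_ge0 x2.
have hmP0 : 0 <= mP by exact: nc_ge0.
have R1 : lam * mP + n x2 * n (Qs x1) <= 2^-1 * (lam * oP + Num.sqrt a).
  apply: (RLm _ _ _ _ _ _ _ (mulr_ge0 hl0 hmP0) (mulr_ge0 hl0 (n_ge0 (Ps x1))) (n_ge0 (Qs x1)) hn1 hn2 (mulr_ge0 hl0 hoP) ha0 hz).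
  - by rewrite mulrCA; apply: ler_wpM2l.
  - by rewrite -mulrA; apply: ler_wpM2l.
  - by rewrite exprMn.
have hl1' : 0 <= 1 - lam by rewrite subr_ge0.
have R2 : (1 - lam) * mP + n x2 * n (R x1) <= 2^-1 * ((1 - lam) * oP + Num.sqrt b).
  apply: (RLm _ _ _ _ _ _ _ (mulr_ge0 hl1' hmP0) (mulr_ge0 hl1' (n_ge0 (Ps x1))) (n_ge0 (R x1)) hn1 hn2 (mulr_ge0 hl1' hoP) hb0 hz).
  - by rewrite mulrCA; apply: ler_wpM2l.
  - by rewrite -mulrA; apply: ler_wpM2l.
  - by rewrite exprMn.
have hs' : nc (h (S x2) x2) <= oS.
  apply: le_trans hs _; rewrite -{2}[oS]mulr1; apply: ler_wpM2l => //.
  have := sqr_ge0 (n x1); lra.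
rewrite /Bf /= !(dDl h_sesq).
apply: le_trans (ncD _ _) _; apply: le_trans (lerD (ncD _ _) (ncD _ _)) _.
rewrite -/mP.
have hr' : nc (h (R x1) x2) <= n x2 * n (R x1) by rewrite mulrC.
lra.
Qed.
End Ops.
End Main.

Theorem theorem2p4 (F : realType) (V : lmodType F[i]) (ip : V -> V -> F[i])
    (A P Q R S Ps Qs Rs : V -> V) :
  is_hilbert ip ->
  positive_op ip A -> (exists x : V, A x != 0) ->
  in_BA ip A P -> in_BA ip A Q -> in_BA ip A R -> in_BA ip A S ->
  is_sharpA ip A P Ps -> is_sharpA ip A Q Qs -> is_sharpA ip A R Rs ->
  forall lam : F, 0 <= lam <= 1 ->
  omegaA2 ip A P Q R S <=
    2^-1 * (opnormA ip A P + 2 * omegaA ip A S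
      + Num.sqrt (opnormA ip A (fun x => rC (lam ^+ 2) *: P (Ps x) + Q (Qs x)))
      + Num.sqrt (opnormA ip A
                    (fun x => rC ((1 - lam) ^+ 2) *: P (Ps x) + Rs (R x)))).
Proof.
move=> [ipL ipC _ ipD _] [[AL _] Apos] _ [[PL _] _] [[QL _] _] [[RL _] _] [[SL _] _]
  [hPs _] [hQs _] [hRs _] lam /andP[hl0 hl1].
have hR0 : 0 <= 2^-1 * (opnormA ip A P + 2 * omegaA ip A S
      + Num.sqrt (opnormA ip A (fun x => rC (lam ^+ 2) *: P (Ps x) + Q (Qs x)))
      + Num.sqrt (opnormA ip A
                    (fun x => rC ((1 - lam) ^+ 2) *: P (Ps x) + Rs (R x)))).
  rewrite mulr_ge0 ?invr_ge0 // !addr_ge0 ?sqrtr_ge0 ?mulr_ge0 //;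
    by [apply: opn_ge0 | apply: omg_ge0].
rewrite /omegaA2.
set E := (X in sup X <= _).
case: (pselect (has_sup E)) => hsE; last by rewrite sup_out.
have hw0 : 0 <= sup E by apply: sup_ge0' => e [z _ <-]; exact: nc_ge0.
have Hw : forall z : V * V, normA ip A z.1 ^+ 2 + normA ip A z.2 ^+ 2 = 1 ->
    nc (@Bf F V ip A P Q R S z z) <= sup E.
  by move=> z hz; apply: sup_upper_bound => //; exists z.
apply: ge_sup; first exact: hsE.1.
move=> e [z hz <-].
exact: (@main_elem _ _ _ _ ipL ipC ipD AL Apos _ _ _ _ PL QL RL SL _ hw0 Hw _ _ _ hPs hQs hRs _ hl0 hl1 _ hz).
Qed.
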